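(* Let $k\ge 1$, $n\ge 2$ and $\mathbf C=(c_0,\dots,c_k)\in\{0,1\}^{k+1}$. Let $\mathbf H_n=(h_0,\dots,h_k)$ with $h_\beta=\binom{k}{\beta}\sum_{j=1}^{n-1}\frac{1}{j^\beta}$, and $\mathbf H_n\mathbf C^T=\sum_{\beta=0}^k h_\beta c_\beta$. For $1\le m\le n$ define $$O_{\mathbf C\max}(n,m+c_k-1)=\frac{(n-1)!^k}{(m-1)!}\,(\mathbf H_n\mathbf C^T)^{m-1}\prod_{i=1}^{n-m}F_{i+1}(\mathbf C').$$ Then $O_{\mathbf C\max}(n,m+c_k-1)\ge O_{\mathbf C}(n,m+c_k-1)$ for all $1\le m\le n$.
   Context: Fix integers $k\ge 1$, $n\ge 1$ and $\mathbf C=(c_0,c_1,\dots,c_k)\in\{0,1\}^{k+1}$; put $\mathbf C'=(1,\dots,1)-\mathbf C$. Consider $k$-tuples $(\pi_1,\dots,\pi_k)$ of permutations of $\{1,\dots,n\}$. A position $\alpha$ is a record of a permutation $\pi$ if $\pi(\alpha)<\pi(\alpha')$ for every $\alpha'<\alpha$ (position $1$ is always a record); equivalently records index the minimal elements of the points $(\alpha,\pi(\alpha))$ under strict componentwise domination. For a tuple, let $l_\alpha$ be the number of $\beta\in\{1,\dots,k\}$ for which $\alpha$ is a record of $\pi_\beta$ (so $l_1=k$). The $\mathbf C$ sequential optimization set of the tuple is $S=\{\alpha:c_{l_\alpha}=1\}$, with weight $|S|$. For an integer $m$, $O_{\mathbf C}(n,m)$ is the number of $k$-tuples whose weight equals $m$.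 For $j\ge 2$ and $X=(x_0,\dots,x_k)\in\mathbb R^{k+1}$, $F_j(X)=\sum_{\beta=0}^k\binom{k}{\beta}\frac{x_\beta}{(j-1)^\beta}$. Empty products equal $1$. *)

(* Defs.v *)
From HB Require Import structures.
From mathcomp Require Import all_boot all_order all_algebra all_fingroup.
Unset Printing Implicit Defensive.
Import Order.TTheory GRing.Theory Num.Theory.

(* Positions and values {1..n} are encoded as 'I_n = {0..n-1} (order-preserving shift). *)

Definition is_record (n : nat) (pi : {perm 'I_n}) (a : 'I_n) : bool :=
  [forall a' : 'I_n, (a' < a)%N ==> (pi a < pi a')%N].

Definition ptuple (k n : nat) := {ffun 'I_k -> {perm 'I_n}}.

Definition lcount (k n : nat) (t : ptuple k n) (a : 'I_n) : nat :=
  #|[set b : 'I_k | is_record n (t b) a]|.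

Definition optset (k n : nat) (C : {ffun 'I_k.+1 -> bool}) (t : ptuple k n) : {set 'I_n} :=
  [set a : 'I_n | C (inord (lcount k n t a))].

Definition weight (k n : nat) (C : {ffun 'I_k.+1 -> bool}) (t : ptuple k n) : nat :=
  #|optset k n C t|.

Definition O_C (k n : nat) (C : {ffun 'I_k.+1 -> bool}) (m : nat) : nat :=
  #|[set t : ptuple k n | weight k n C t == m]|.

Local Open Scope ring_scope.

Definition Fj (k j : nat) (X : 'I_k.+1 -> rat) : rat :=
  \sum_(b < k.+1) ('C(k, nat_of_ord b))%:R * X b / ((j - 1)%:R ^+ b).

Definition Cprime (k : nat) (C : {ffun 'I_k.+1 -> bool}) : 'I_k.+1 -> rat :=
  fun b => 1 - (C b)%:R.

Definition hcoef (k n : nat) (b : 'I_k.+1) : rat :=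
  ('C(k, nat_of_ord b))%:R * \sum_(1 <= j < n) (((j%:R : rat) ^+ (nat_of_ord b))^-1).

Definition HC (k n : nat) (C : {ffun 'I_k.+1 -> bool}) : rat :=
  \sum_(b < k.+1) @hcoef k n b * (C b)%:R.

Definition O_Cmax (k n : nat) (C : {ffun 'I_k.+1 -> bool}) (m : nat) : rat :=
  ((n.-1)`! ^ k)%:R / ((m.-1)`!)%:R * @HC k n C ^+ (m.-1)
  * \prod_(1 <= i < (n - m).+1) @Fj k i.+1 (Cprime k C).

(* Main.v *)
Require Import Defs.
From HB Require Import structures.
From mathcomp Require Import all_boot all_order all_algebra all_fingroup.
From mathcomp Require Import zify ring lra.
Import Order.TTheory GRing.Theory Num.Theory.

Lemma bump_ltn h i j : (bump h i < bump h j)%N = (i < j)%N.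
Proof. by rewrite /bump; case: (leqP h i); case: (leqP h j) => /=; lia. Qed.

Lemma rec_lift n (s : {perm 'I_n}) (v : 'I_n.+1) (i : 'I_n) :
  is_record n.+1 (lift_perm ord_max v s) (lift ord_max i) = is_record n s i.
Proof.
apply/forallP/forallP => H a.
  apply/implyP => ai; have := implyP (H (lift ord_max a)).
  rewrite !lift_max => /(_ ai); rewrite !lift_perm_lift /= bump_ltn; exact.
apply/implyP; rewrite lift_max => ai.
have an : (a < n)%N by apply: ltn_trans ai (ltn_ord i).
have -> : a = lift ord_max (Ordinal an) by apply: val_inj; rewrite /= /bump leqNgt an.
rewrite !lift_perm_lift /= bump_ltn.
by have := implyP (H (Ordinal an)); apply.
Qed.

Lemma rec_max n (s : {perm 'I_n}) (v : 'I_n.+1) :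
  is_record n.+1 (lift_perm ord_max v s) ord_max = (v == ord0).
Proof.
apply/forallP/eqP => [H|->].
  apply/val_inj => /=; apply/eqP; rewrite eqn_leq leq0n andbT; apply/negP => v0.
  move: v0; move: H; move: v; move: s; case: n => [|n] s v H v0; first by have := ltn_ord v; lia.
  have := implyP (H (lift ord_max ((s^-1)%g ord0))).
  rewrite lift_max /= ltn_ord lift_perm_id lift_perm_lift permKV /= => /(_ isT).
  by rewrite /bump; case: leqP => /=; lia.
move=> a; apply/implyP => an; rewrite lift_perm_id.
have -> : a = lift ord_max (Ordinal an) by apply: val_inj; rewrite /= /bump leqNgt an.
by rewrite lift_perm_lift /= /bump leq0n.
Qed.

Definition zeros {k n} (v : {ffun 'I_k -> 'I_n.+1}) := #|[set b | v b == ord0]|.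
Definition Phi {k n} (p : ptuple k n * {ffun 'I_k -> 'I_n.+1}) : ptuple k n.+1 :=
  [ffun b => lift_perm ord_max (p.2 b) (p.1 b)].
Definition cntA k n (P : 'I_k.+1 -> bool) :=
  #|[set v : {ffun 'I_k -> 'I_n.+1} | P (inord (zeros v))]|.

Lemma card_setsum (T : finType) (P : pred T) : #|[set x | P x]| = \sum_x (P x : nat).
Proof.
rewrite -sum1_card big_mkcond /=; apply: eq_bigr => x _; rewrite inE; by case: (P x).
Qed.

Lemma lcount_lift k n s v i :
  lcount k n.+1 (Phi (s, v)) (lift ord_max i) = lcount k n s i.
Proof.
by apply: eq_card => b; rewrite !inE ffunE /= rec_lift.
Qed.

Lemma lcount_max k n s v :
  lcount k n.+1 (Phi (s, v)) ord_max = zeros v.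
Proof.
by apply: eq_card => b; rewrite !inE ffunE /= rec_max.
Qed.

Lemma weight_Phi k n C s v :
  weight k n.+1 C (Phi (s, v)) = weight k n C s + C (inord (zeros v)).
Proof.
rewrite /weight /optset !card_setsum big_ord_recr /= lcount_max; congr (_ + _).
apply: eq_bigr => i _.
have -> : widen_ord (leqnSn n) i = lift ord_max i.
  by apply: val_inj; rewrite /= /bump leqNgt ltn_ord.
by rewrite lcount_lift.
Qed.

Lemma Phi_inj k n : injective (@Phi k n).
Proof.
move=> [s1 v1] [s2 v2] /ffunP H.
have ev : v1 = v2.
  apply/ffunP => b; have := H b; rewrite !ffunE /= => /(congr1 (fun p : {perm 'I_n.+1} => p ord_max)).
  by rewrite !lift_perm_id.
subst v2; congr pair; apply/ffunP => b; apply/permP => x.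
have := H b; rewrite !ffunE /= => /(congr1 (fun p : {perm 'I_n.+1} => p (lift ord_max x))).
by rewrite !lift_perm_lift => /lift_inj.
Qed.

Lemma Phi_bij k n : bijective (@Phi k n).
Proof.
apply: inj_card_bij; first exact: Phi_inj.
rewrite card_prod !card_ffun !card_ord !card_Sn factS -expnMn mulnC.
by [].
Qed.

Lemma OC_sum k n C w : O_C k n C w = \sum_(t : ptuple k n) (weight k n C t == w : nat).
Proof. by rewrite /O_C card_setsum. Qed.

Lemma OC_rec k n C w :
  O_C k n.+1 C w = cntA k n C * (if w is w'.+1 then O_C k n C w' else 0)
                   + cntA k n (fun b => ~~ C b) * O_C k n C w.
Proof.
rewrite OC_sum (reindex (@Phi k n)) /=; last first.
  by apply: onW_bij; apply: Phi_bij.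
rewrite -(pair_big xpredT xpredT (fun s v => (weight k n.+1 C (Phi (s, v)) == w : nat))) /=.
rewrite exchange_big /=.
rewrite /cntA !card_setsum !big_distrl /= -big_split /=.
apply: eq_bigr => v _.
under eq_bigr do rewrite weight_Phi.
case: (C _) => /=.
  case: w => [|w]; rewrite ?mul0n ?mul1n ?muln0 ?addn0 ?add0n.
    by rewrite big1 // => s _; rewrite addn1.
  by rewrite OC_sum; apply: eq_bigr => s _; rewrite addn1 eqSS.
by rewrite ?mul0n ?mul1n ?add0n OC_sum; apply: eq_bigr => s _; rewrite addn0.
Qed.

Lemma card_zset k n (Z : {set 'I_k}) :
  #|[set v : {ffun 'I_k -> 'I_n.+1} | [set b | v b == ord0] == Z]| = n ^ (k - #|Z|).
Proof.
pose F := fun b : 'I_k => if b \in Z then pred1 (@ord0 n) else predC1 (@ord0 n).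
have -> : [set v : {ffun 'I_k -> 'I_n.+1} | [set b | v b == ord0] == Z] =
   [set v : {ffun 'I_k -> 'I_n.+1} | v \in family F].
  apply/setP => v; rewrite !inE; apply/eqP/familyP => [E b|H].
    by rewrite /F -E inE; case: eqP => [->|/eqP ne]; rewrite !inE ?eqxx.
  apply/setP => b /=; have := H b; rewrite /F inE; case: (b \in Z) => /=; first by [].
  by move/negbTE.
rewrite cardsE card_family.
have -> : foldr muln 1 [seq #|F x| | x : 'I_k] = \prod_(x : 'I_k) #|F x|.
  have fE (s : seq nat) : foldr muln 1 s = \prod_(i <- s) i.
    by elim: s => [|a s IH]; rewrite ?big_nil ?big_cons //= IH.
  by rewrite fE big_image.
rewrite (bigID (fun x => x \in Z)) /=.
rewrite big1 ?mul1n; last by move=> x xZ; rewrite /F xZ card1.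
rewrite (eq_bigr (fun _ => n)); last first.
  by move=> x xZ; rewrite /F (negbTE xZ) cardC1 card_ord.
rewrite prod_nat_const.
congr (_ ^ _); have := cardsC Z; rewrite card_ord => E.
have -> : #|(fun i : 'I_k => i \notin Z)| = #|~: Z| by apply: eq_card => i; rewrite !inE.
move: E; set a := #|Z|; set b := #|~: Z|; lia.
Qed.

Lemma card_zeros k n (be : nat) :
  #|[set v : {ffun 'I_k -> 'I_n.+1} | zeros v == be]| = 'C(k, be) * n ^ (k - be).
Proof.
rewrite card_setsum.
transitivity (\sum_(v : {ffun 'I_k -> 'I_n.+1}) \sum_(Z : {set 'I_k})
    (([set b | v b == ord0] == Z) * (#|Z| == be))).
  apply: eq_bigr => v _; rewrite (bigD1 [set b | v b == ord0]) //= eqxx mul1n.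
  by rewrite big1 ?addn0 // => Z /negbTE; rewrite eq_sym => ->.
rewrite exchange_big /=.
transitivity (\sum_(Z : {set 'I_k}) (#|Z| == be) * n ^ (k - be)).
  apply: eq_bigr => Z _.
  case: eqP => [<-|_]; last by rewrite mul0n big1 // => v _; rewrite muln0.
  rewrite mul1n -(card_zset k n Z) card_setsum.
  by apply: eq_bigr => v _; rewrite muln1.
by rewrite -big_distrl /= -card_setsum card_draws card_ord.
Qed.

Lemma cntA_formula k n (P : 'I_k.+1 -> bool) :
  cntA k n P = \sum_(b < k.+1) P b * ('C(k, b) * n ^ (k - b)).
Proof.
rewrite /cntA card_setsum.
transitivity (\sum_(v : {ffun 'I_k -> 'I_n.+1}) \sum_(b < k.+1)
    P b * (zeros v == b)).
  apply: eq_bigr => v _.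
  have zk : (zeros v < k.+1)%N by rewrite ltnS /zeros -[X in (_ <= X)%N](card_ord k) max_card.
  rewrite (bigD1 (Ordinal zk)) //= eqxx muln1 big1 ?addn0.
    by congr (nat_of_bool (P _)); apply: val_inj; rewrite /= inordK.
  move=> b /eqP nb; case: eqP => [e|]; last by rewrite muln0.
  by case: nb; apply: val_inj; rewrite /= e.
rewrite exchange_big /=; apply: eq_bigr => b _.
by rewrite -big_distrr /= -card_setsum card_zeros.
Qed.

Lemma OC0 k C w : O_C k 0 C w = (w == 0%N).
Proof.
rewrite OC_sum (eq_bigr (fun _ => (0 == w)%N : nat)); last first.
  by move=> t _; rewrite /weight; congr (nat_of_bool (_ == _)); apply/eqP; rewrite cards_eq0; apply/eqP/setP => -[].
rewrite sum_nat_const card_ffun card_Sn /= exp1n mul1n.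
by rewrite eq_sym.
Qed.

Lemma cntA0 k (P : 'I_k.+1 -> bool) : cntA k 0 P = P ord_max.
Proof.
rewrite cntA_formula big_ord_recr /= big1 ?add0n; last first.
  by move=> b _; rewrite exp0n ?muln0 //=; have := ltn_ord b; lia.
by rewrite subnn expn0 binn !muln1.
Qed.

Lemma OC1 k C w : O_C k 1 C w = (w == C ord_max).
Proof.
rewrite OC_rec !cntA0 !OC0.
case: w => [|w]; case: (C ord_max) => /=.
all: rewrite ?muln0 ?mul0n ?add0n ?addn0 ?mul1n ?muln1 //.
by rewrite OC0.
Qed.

Lemma OCz k n (C : {ffun 'I_k.+1 -> bool}) : C ord_max -> O_C k n.+1 C 0 = 0%N.
Proof.
move=> c; elim: n => [|n IH]; first by rewrite OC1 c.
by rewrite OC_rec IH !muln0.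
Qed.

Lemma OC_recj k n (C : {ffun 'I_k.+1 -> bool}) j : (0 < n)%N ->
  O_C k n.+1 C (j + C ord_max) =
   cntA k n C * (if j is j'.+1 then O_C k n C (j' + C ord_max) else 0)
   + cntA k n (fun b => ~~ C b) * O_C k n C (j + C ord_max).
Proof.
move=> n0; rewrite OC_rec; congr (_ * _ + _).
case: j => [|j]; last by rewrite addSn.
case E: (C ord_max) => //=.
by case: n n0 => // n _; rewrite OCz.
Qed.
Local Open Scope ring_scope.

Definition xx k (C : {ffun 'I_k.+1 -> bool}) (a : nat) : rat :=
  \sum_(b < k.+1) ('C(k, b))%:R * (C b)%:R / ((a - 1)%:R ^+ b).

Lemma cnt_rat k n (P : 'I_k.+1 -> bool) : (0 < n)%N ->
  (cntA k n P)%:R = (n%:R ^+ k : rat) * \sum_(b < k.+1) ('C(k, b))%:R * (P b)%:R / (n%:R ^+ b).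
Proof.
move=> n0; rewrite cntA_formula natr_sum mulr_sumr; apply: eq_bigr => b _.
rewrite !natrM natrX exprB; last by rewrite unitfE pnatr_eq0 -lt0n.
  ring.
by rewrite -ltnS.
Qed.

Lemma cntC_rat k n (C : {ffun 'I_k.+1 -> bool}) : (0 < n)%N -> (cntA k n C)%:R = (n%:R ^+ k : rat) * xx k C n.+1.
Proof. by move=> n0; rewrite cnt_rat // /xx subn1. Qed.

Lemma cntCp_rat k n (C : {ffun 'I_k.+1 -> bool}) : (0 < n)%N ->
  (cntA k n (fun b => ~~ C b))%:R = (n%:R ^+ k : rat) * Fj k n.+1 (Cprime k C).
Proof.
move=> n0; rewrite cnt_rat // /Fj subn1 /=; congr (_ * _); apply: eq_bigr => b _.
by rewrite /Cprime; case: (C b).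
Qed.

Lemma xx_ge0 k C a : 0 <= xx k C a.
Proof.
by apply: sumr_ge0 => b _; apply: divr_ge0; [apply: mulr_ge0|apply: exprn_ge0].
Qed.

Lemma Cprime_ge0 k C b : 0 <= Cprime k C b.
Proof. by rewrite /Cprime; case: (C b); rewrite ?subrr ?subr0. Qed.

Lemma Fj_ge0 k C a : 0 <= Fj k a (Cprime k C).
Proof.
apply: sumr_ge0 => b _; apply: divr_ge0; last by apply: exprn_ge0.
by apply: mulr_ge0 => //; apply: Cprime_ge0.
Qed.

Lemma Fj_mono k C a a' : (2 <= a)%N -> (a <= a')%N ->
  Fj k a' (Cprime k C) <= Fj k a (Cprime k C).
Proof.
move=> a2 aa; apply: ler_sum => b _; apply: ler_wpM2l.
  by apply: mulr_ge0 => //; apply: Cprime_ge0.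
have p1 : 0 < (a - 1)%:R ^+ b :> rat by apply: exprn_gt0; rewrite ltr0n; lia.
have p2 : 0 < (a' - 1)%:R ^+ b :> rat by apply: exprn_gt0; rewrite ltr0n; lia.
rewrite lef_pV2 ?posrE //; apply: lerXn2r; rewrite ?nnegrE ?ler0n // ler_nat; lia.
Qed.

Lemma bern (X x : rat) j : 0 <= X -> 0 <= x ->
  X ^+ j.+1 + j.+1%:R * x * X ^+ j <= (X + x) ^+ j.+1.
Proof.
move=> X0 x0; elim: j => [|j IH]; first by rewrite expr1 expr0 mulr1 mul1r.
apply: le_trans (ler_wpM2l (addr_ge0 X0 x0) IH).
have h1 : 0 <= x * (j.+1%:R * x * X ^+ j).
  by apply: mulr_ge0 => //; apply: mulr_ge0; [apply: mulr_ge0|apply: exprn_ge0].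
have -> : (X + x) * (X ^+ j.+1 + j.+1%:R * x * X ^+ j) =
  X ^+ j.+2 + j.+2%:R * x * X ^+ j.+1 + x * (j.+1%:R * x * X ^+ j).
  by rewrite !exprS -[j.+2]addn1 -[j.+1]addn1 !natrD; ring.
by rewrite lerDl.
Qed.

Definition XX k C n := \sum_(1 <= i < n) xx k C i.+1.
Definition PP k C n j := \prod_(1 <= i < n - j) Fj k i.+1 (Cprime k C).

Lemma XX_ge0 k C n : 0 <= XX k C n.
Proof. by apply: sumr_ge0 => i _; apply: xx_ge0. Qed.

Lemma PP_ge0 k C n j : 0 <= PP k C n j.
Proof. by apply: prodr_ge0 => i _; apply: Fj_ge0. Qed.

Lemma eq_addr_same (j c : nat) : (j + c == c)%N = (j == 0%N).
Proof. by rewrite -{2}(add0n c) eqn_add2r. Qed.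

Lemma main_ind k (C : {ffun 'I_k.+1 -> bool}) n :
  (forall j, (n.+1 <= j)%N -> O_C k n.+1 C (j + C ord_max) = 0%N) /\
  (forall j, (O_C k n.+1 C (j + C ord_max))%:R * (j`!)%:R
      <= ((n`! ^ k)%N%:R : rat) * XX k C n.+1 ^+ j * PP k C n.+1 j).
Proof.
elim: n => [|n [IH1 IH2]].
  split=> [j j1|j]; first by rewrite OC1 eq_addr_same; case: j j1.
  rewrite OC1 eq_addr_same.
  case: j => [|j] /=.
    by rewrite /XX /PP !big_geq // fact0 exp1n !mulr1.
  by rewrite mul0r; apply: mulr_ge0; [apply: mulr_ge0; [|apply: exprn_ge0; apply: XX_ge0]|apply: PP_ge0].
set c := C ord_max.
split=> [j j1|j].
  rewrite OC_recj //; case: j j1 => // j j1; rewrite !IH1 ?muln0 //; lia.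
have n0 : (0 < n.+1)%N by [].
rewrite OC_recj // natrD !natrM (cntC_rat _ _ _ n0) (cntCp_rat _ _ _ n0).
set N := n.+1.
set F := ((n`! ^ k)%N%:R : rat).
have FF : ((N`! ^ k)%N%:R : rat) = F * N%:R ^+ k by rewrite factS expnMn natrM natrX mulrC.
rewrite FF.
have F0 : 0 <= F by apply: ler0n.
have Nk0 : 0 <= N%:R ^+ k :> rat by apply: exprn_ge0; apply: ler0n.
have XXS : XX k C N.+1 = XX k C N + xx k C N.+1 by rewrite /XX big_nat_recr.
rewrite XXS.
set X := XX k C N; set x := xx k C N.+1; set y := Fj k N.+1 (Cprime k C).
have X0 : 0 <= X by apply: XX_ge0.
have x0 : 0 <= x by apply: xx_ge0.
have y0 : 0 <= y by apply: Fj_ge0.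
case: j => [|j].
  rewrite mulr0 add0r fact0 mulr1 expr0 mulr1.
  have PS : PP k C N.+1 0 = PP k C N 0 * y by rewrite /PP !subn0 big_nat_recr.
  rewrite PS.
  have := IH2 0%N; rewrite fact0 mulr1 expr0 mulr1 => H.
  have -> : N%:R ^+ k * y * (O_C k N C (0 + c))%:R = (N%:R ^+ k * y) * (O_C k N C (0 + c))%:R by [].
  have -> : F * N%:R ^+ k * (PP k C N 0 * y) = (N%:R ^+ k * y) * (F * PP k C N 0) by ring.
  by apply: ler_wpM2l => //; apply: mulr_ge0.
have PS : PP k C N.+1 j.+1 = PP k C N j by rewrite /PP subSS.
rewrite PS.
set P := PP k C N j.
have P0 : 0 <= P by apply: PP_ge0.
set O1 := (O_C k N C (j + c))%:R : rat.
set O2 := (O_C k N C (j.+1 + c))%:R : rat.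
have H1 : O1 * (j`!)%:R <= F * X ^+ j * P by apply: IH2.
have H2 : N%:R ^+ k * y * O2 * (j.+1`!)%:R <= N%:R ^+ k * F * X ^+ j.+1 * P.
  case: (ltnP j.+1 N) => jN; last first.
    rewrite /O2 IH1 // mulr0 mul0r; apply: mulr_ge0 => //; apply: mulr_ge0; last exact: exprn_ge0.
    exact: mulr_ge0.
  have H := IH2 j.+1.
  have PS2 : P = PP k C N j.+1 * Fj k (N - j) (Cprime k C).
    rewrite /P /PP.
    have -> : (N - j = (N - j.+1).+1)%N by lia.
    rewrite big_nat_recr /=; last by lia.
    by congr (_ * _); congr (Fj k _ _); lia.
  have ym : y <= Fj k (N - j) (Cprime k C) by apply: Fj_mono; lia.
  apply: le_trans (_ : N%:R ^+ k * y * (F * X ^+ j.+1 * PP k C N j.+1) <= _).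
    rewrite -mulrA; apply: ler_wpM2l; first exact: mulr_ge0.
    exact: H.
  rewrite PS2.
  have -> : N%:R ^+ k * y * (F * X ^+ j.+1 * PP k C N j.+1) =
     (N%:R ^+ k * F * X ^+ j.+1 * PP k C N j.+1) * y by ring.
  have -> : N%:R ^+ k * F * X ^+ j.+1 * (PP k C N j.+1 * Fj k (N - j) (Cprime k C)) =
     (N%:R ^+ k * F * X ^+ j.+1 * PP k C N j.+1) * Fj k (N - j) (Cprime k C) by ring.
  apply: ler_wpM2l => //.
  apply: mulr_ge0; last exact: PP_ge0.
  by apply: mulr_ge0; [apply: mulr_ge0|apply: exprn_ge0].
have E : (N%:R ^+ k * x * O1 + N%:R ^+ k * y * O2) * (j.+1`!)%:R =
   (N%:R ^+ k * x * j.+1%:R) * (O1 * (j`!)%:R) + N%:R ^+ k * y * O2 * (j.+1`!)%:R.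
  by rewrite factS natrM; ring.
rewrite E.
have H3 : (N%:R ^+ k * x * j.+1%:R) * (O1 * (j`!)%:R) <= (N%:R ^+ k * x * j.+1%:R) * (F * X ^+ j * P).
  by apply: ler_wpM2l => //; apply: mulr_ge0 => //; apply: mulr_ge0.
apply: le_trans (lerD H3 H2) _.
have B := bern X x j X0 x0.
have -> : N%:R ^+ k * x * j.+1%:R * (F * X ^+ j * P) + N%:R ^+ k * F * X ^+ j.+1 * P =
   (F * N%:R ^+ k * P) * (X ^+ j.+1 + j.+1%:R * x * X ^+ j) by ring.
have -> : F * N%:R ^+ k * (X + x) ^+ j.+1 * P = (F * N%:R ^+ k * P) * (X + x) ^+ j.+1 by ring.
apply: ler_wpM2l => //.
by apply: mulr_ge0 => //; apply: mulr_ge0.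
Qed.

Lemma HC_XX k n C : HC k n C = XX k C n.
Proof.
rewrite /HC /XX /hcoef /xx.
under eq_bigr do rewrite mulrAC mulr_sumr.
rewrite exchange_big /=; apply: eq_big_nat => i _; apply: eq_bigr => b _.
by rewrite subn1 /= mulrAC.
Qed.

Theorem theorem5p1 (k n : nat) (C : {ffun 'I_k.+1 -> bool}) (m : nat) :
  (1 <= k)%N -> (2 <= n)%N -> (1 <= m <= n)%N ->
  (O_C k n C (m + C ord_max - 1))%:R <= O_Cmax k n C m.
Proof.
move=> k1 n2 /andP[m1 mn].
case: n n2 mn => // n _ mn; case: m m1 mn => // j _ mn.
have [_ H] := main_ind k C n.
have := H j.
rewrite /O_Cmax HC_XX addSn subn1 /=.
have -> : ((n.+1 - j.+1).+1 = n.+1 - j)%N by lia.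
rewrite -/(PP k C n.+1 j) => {}H.
set A := ((n`! ^ k)%N%:R : rat).
set f := ((j`!)%:R : rat).
have -> : A / f * XX k C n.+1 ^+ j * PP k C n.+1 j = (A * XX k C n.+1 ^+ j * PP k C n.+1 j) / f.
  by ring.
by rewrite ler_pdivlMr // ltr0n fact_gt0.
Qed.
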